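(* Let $G$ be a finite group and $S\le H$ subgroups of $G$ with $S\trianglelefteq G$. Let $\theta\in\mathrm{Irr}(H)$ lie above $\lambda\in\mathrm{Irr}(S)$, and let $\theta_\lambda\in\mathrm{Irr}(H(\lambda))$ be the $\lambda$-Clifford correspondent of $\theta$. If $\theta$ extends to its stabilizer $G(\theta)$ in $G$, then $\theta_\lambda$ extends to $G(\theta,\lambda)$.
   Context: $K(\phi)$ (resp. $K(\phi_1,\phi_2)$) is the stabilizer in $K$ of $\phi$ (resp. of both $\phi_1$ and $\phi_2$). The $\lambda$-Clifford correspondent $\theta_\lambda$ is the unique irreducible character of $H(\lambda)$ lying above $\lambda$ and inducing $\theta$. *)

(* Defs.v *)
From mathcomp Require Export all_boot all_order all_algebra all_fingroup all_solvable all_field all_character.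
Set Implicit Arguments. Unset Strict Implicit. Unset Printing Implicit Defensive.

(* Main.v *)
Require Import Defs.
Import GroupScope GRing.Theory Num.Theory.
Local Open Scope ring_scope.

Theorem lemma6p1 (gT : finGroupType) (G H S : {group gT})
  (t : Iirr H) (l : Iirr S) (p : Iirr 'I_H['chi_l]) :
  S \subset H -> H \subset G -> S <| G ->
  l \in irr_constt ('Res[S] 'chi_t) ->
  l \in irr_constt ('Res[S] 'chi_p) ->
  'Ind[H] 'chi_p = 'chi_t ->
  (exists c : Iirr 'I_G['chi_t], 'Res[H] 'chi_c = 'chi_t) ->
  exists c : Iirr ('I_G['chi_t] :&: 'I_G['chi_l])%G,
    'Res['I_H['chi_l]] 'chi_c = 'chi_p.
Proof.
move=> sSH sHG nsSG lSt lSp Indp [c Resc].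
set T := 'I_G['chi_t]%G.
set U := ('I_G['chi_t] :&: 'I_G['chi_l])%G.
set Hl := 'I_H['chi_l]%G.
have sHT : H \subset T by apply: sub_Inertia.
have sHlH : Hl \subset H by apply: Inertia_sub.
have sUT : U \subset T by apply: subsetIl.
have sHlU : Hl \subset U.
  by rewrite subsetI (subset_trans sHlH sHT) setSI.
have sSHl : S \subset Hl by apply: sub_Inertia.
have sSU : S \subset U := subset_trans sSHl sHlU.
have sTG : T \subset G by apply: Inertia_sub.
have nsSU : S <| U := normalS sSU (subset_trans sUT sTG) nsSG.
have nsSH : S <| H := normalS sSH sHG nsSG.
have sUI : U \subset 'I['chi_l] by apply: subset_trans (subsetIr _ _) (subsetIr _ _).
have lSc : l \in irr_constt ('Res[S] 'chi_c) by rewrite -(cfResRes _ sSH sHT) Resc.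
have [s sUs lSs] : exists2 s, s \in irr_constt ('Res[U] 'chi_c)
                               & l \in irr_constt ('Res[S] 'chi_s).
  apply/exists_inP; rewrite -negb_forall_in; apply: contraL lSc => /forall_inP H0.
  rewrite irr_consttE negbK -(cfResRes _ sSU sUT) {1}['Res[U] 'chi_c]cfun_sum_constt.
  rewrite linear_sum cfdot_suml big1 // => k sUk.
  by rewrite linearZ cfdotZl; have := H0 k sUk => /eqP->; rewrite mulr0.
have DsS : 'Res[S] 'chi_s = '['Res[S] 'chi_s, 'chi_l] *: 'chi_l.
  by rewrite {1}(Clifford_Res_sum_cfclass nsSU lSs) cfclass_invariant // big_seq1.
have [_ _ _ partc _] := constt_Inertia_bijection l nsSH.
have pA : p \in irr_constt ('Ind[Hl] 'chi_l) by rewrite constt_Ind_Res.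
have onlyp : forall k, k \in irr_constt ('Res[Hl] 'chi_s) -> k = p.
  move=> k kHs; apply/eqP.
  have := partc p pA k; rewrite Indp !inE => <-; apply/andP; split.
    have Nc : 'Res[U] 'chi_c \is a character by rewrite cfRes_char ?irr_char.
    have := constt_Res_trans Nc sUs kHs.
    by rewrite cfResRes // -(cfResRes _ sHlH sHT) Resc.
  rewrite -irr_consttE constt_Ind_Res.
  have [j jSk] := constt_cfRes_irr S k.
  have Ns : 'Res[Hl] 'chi_s \is a character by rewrite cfRes_char ?irr_char.
  have := constt_Res_trans Ns kHs jSk; rewrite cfResRes // DsS.
  rewrite irr_consttE cfdotZl cfdot_irr mulf_eq0 negb_or => /andP[_].
  by move: jSk; case: (l =P j) => [<- | _ _]; [move=> ? _ | rewrite eqxx].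
have [k0 k0Hs] := neq0_has_constt (Res_irr_neq0 Hl s).
have pHs : p \in irr_constt ('Res[Hl] 'chi_s) by rewrite -(onlyp k0 k0Hs).
have DsHl : 'Res[Hl] 'chi_s = '['Res[Hl] 'chi_s, 'chi_p] *: 'chi_p.
  rewrite {1}['Res[Hl] 'chi_s]cfun_sum_constt (bigD1 p) //= big1 ?addr0 //.
  by move=> k /andP[kHs /eqP[]]; rewrite (onlyp k kHs).
have Nc : 'Res[U] 'chi_c \is a character by rewrite cfRes_char ?irr_char.
have le1 := @cfdot_Res_ge_constt _ U Hl p s _ Nc sUs.
rewrite cfResRes // -(cfResRes _ sHlH sHT) Resc (cfdot_Res_l 'chi_t) Indp cfnorm_irr in le1.
have /natrP[n Dn] : '['Res[Hl] 'chi_s, 'chi_p] \in Num.nat.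
  by rewrite Cnat_cfdot_char ?cfRes_char ?irr_char.
rewrite Dn in le1 pHs DsHl; rewrite irr_consttE Dn in pHs.
exists s; rewrite DsHl.
have -> : n = 1%N.
  by move: le1 pHs; rewrite lern1 pnatr_eq0; case: (n) => [|[|]].
by rewrite scale1r.
Qed.
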